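(* In the setting of the EM iteration $\mathbf p_{n+1}=T(\mathbf p_n)$ with $$T(\mathbf p)_j=(n+m)^{-1}\Big(\xi_j+\frac{p_j}{W(t_j)}\sum_{k\le j}\frac{\zeta_k}{\sum_{l\ge k}p_l/W(t_l)}\Big)$$ for maximizing $\mathcal L(\mathbf p)=\prod_{j=1}^h p_j^{\xi_j}\big(\sum_{k\ge j} p_k/W(t_k)\big)^{\zeta_j}$ over the probability simplex (where $0<t_1<\dots<t_h$, $W$ positive nondecreasing, $\xi_j,\zeta_j$ nonnegative integers with $\xi_j+\zeta_j\ge1$, $m=\sum\xi_j$, $n=\sum\zeta_j$), suppose the (unique) maximizer $\mathbf p^*$ of $\mathcal L$ over the simplex satisfies $p^*_j>0$ for all $j=1,\dots,h$. Then for any starting point $\mathbf p_0$ in the simplex with all coordinates positive, the iterates $\mathbf p_n$ converge to $\mathbf p^*$.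
   Context: $\xi_j,\zeta_j$ are the multiplicities of uncensored and censored observations at $t_j$; $\mathbf p$ gives the masses at $t_1,\dots,t_h$ of a discrete distribution. *)

(* Defs.v *)
From Stdlib Require Import Reals List.
Import ListNotations.
Open Scope R_scope.

(* Indices j = 1..h of the paper are shifted to 0..h-1 here. *)

Definition rsum (lo hi : nat) (f : nat -> R) : R :=
  fold_right Rplus 0 (map f (seq lo (hi - lo))).

Definition rprod (lo hi : nat) (f : nat -> R) : R :=
  fold_right Rmult 1 (map f (seq lo (hi - lo))).

Definition nsum (h : nat) (f : nat -> nat) : nat :=
  fold_right Nat.add 0%nat (map f (seq 0 h)).

Definition in_simplex (h : nat) (p : nat -> R) : Prop :=
  (forall j, (j < h)%nat -> 0 <= p j) /\ rsum 0 h p = 1.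

Definition tailW (h : nat) (t : nat -> R) (W : R -> R) (p : nat -> R) (k : nat) : R :=
  rsum k h (fun l => p l / W (t l)).

Definition lik (h : nat) (t : nat -> R) (W : R -> R) (xi zeta : nat -> nat)
  (p : nat -> R) : R :=
  rprod 0 h (fun j => p j ^ xi j * tailW h t W p j ^ zeta j).

Definition EM_T (h : nat) (t : nat -> R) (W : R -> R) (xi zeta : nat -> nat)
  (p : nat -> R) : nat -> R :=
  fun j => / INR (nsum h zeta + nsum h xi) *
    (INR (xi j) + p j / W (t j) *
       rsum 0 (S j) (fun k => INR (zeta k) / tailW h t W p k)).

(* Main.v *)
Require Import Defs.
From Stdlib Require Import Reals Lra Lia List Arith.
Import ListNotations.
Open Scope R_scope.

Lemma rsum_empty lo hi f : (hi <= lo)%nat -> rsum lo hi f = 0.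
Proof. intros H. unfold rsum. replace (hi - lo)%nat with 0%nat by lia. reflexivity. Qed.

Lemma rsum_Sr lo hi f : (lo <= hi)%nat -> rsum lo (S hi) f = rsum lo hi f + f hi.
Proof.
  intros H. unfold rsum. replace (S hi - lo)%nat with (S (hi - lo)) by lia.
  rewrite seq_S, map_app, fold_right_app. simpl.
  replace (lo + (hi - lo))%nat with hi by lia.
  generalize (map f (seq lo (hi - lo))). intros l; induction l; simpl; lra.
Qed.

Lemma rsum_Sl lo hi f : (lo < hi)%nat -> rsum lo hi f = f lo + rsum (S lo) hi f.
Proof.
  intros H. unfold rsum. replace (hi - lo)%nat with (S (hi - S lo)) by lia. reflexivity.
Qed.

Lemma rsum_ind lo (P : nat -> R -> Prop) f :
  P lo 0 -> (forall hi s, (lo <= hi)%nat -> P hi s -> P (S hi) (s + f hi)) ->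
  forall hi, (lo <= hi)%nat -> P hi (rsum lo hi f).
Proof.
  intros H0 HS hi Hhi. induction Hhi.
  - rewrite rsum_empty by lia. exact H0.
  - rewrite rsum_Sr by lia. apply HS; auto.
Qed.

Lemma rsum_ext lo hi f g : (forall k, (lo <= k < hi)%nat -> f k = g k) -> rsum lo hi f = rsum lo hi g.
Proof.
  intros H. destruct (le_lt_dec lo hi) as [Hl|Hl].
  - induction Hl. + rewrite !rsum_empty; lia||lra.
    + rewrite !rsum_Sr by lia. rewrite IHHl by (intros; apply H; lia). rewrite H by lia. reflexivity.
  - rewrite !rsum_empty; lia||lra.
Qed.

Lemma rsum_plus lo hi f g : rsum lo hi (fun k => f k + g k) = rsum lo hi f + rsum lo hi g.
Proof.
  destruct (le_lt_dec lo hi) as [Hl|Hl].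
  - induction Hl. + rewrite !rsum_empty; lia||lra.
    + rewrite !rsum_Sr by lia. rewrite IHHl. lra.
  - rewrite !rsum_empty; lia||lra.
Qed.

Lemma rsum_scal lo hi c f : rsum lo hi (fun k => c * f k) = c * rsum lo hi f.
Proof.
  destruct (le_lt_dec lo hi) as [Hl|Hl].
  - induction Hl. + rewrite !rsum_empty; lia||lra.
    + rewrite !rsum_Sr by lia. rewrite IHHl. lra.
  - rewrite !rsum_empty; lia||lra.
Qed.

Lemma rsum_le lo hi f g : (forall k, (lo <= k < hi)%nat -> f k <= g k) -> rsum lo hi f <= rsum lo hi g.
Proof.
  intros H. destruct (le_lt_dec lo hi) as [Hl|Hl].
  - induction Hl. + rewrite !rsum_empty; lia||lra.
    + rewrite !rsum_Sr by lia. assert (f m <= g m) by (apply H; lia).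
      assert (rsum lo m f <= rsum lo m g) by (apply IHHl; intros; apply H; lia). lra.
  - rewrite !rsum_empty; lia||lra.
Qed.

Lemma rsum_const0 lo hi : rsum lo hi (fun _ => 0) = 0.
Proof.
  destruct (le_lt_dec lo hi) as [Hl|Hl].
  - induction Hl. + rewrite !rsum_empty; lia||lra.
    + rewrite !rsum_Sr by lia. rewrite IHHl. lra.
  - rewrite !rsum_empty; lia||lra.
Qed.

Lemma rsum_nonneg lo hi f : (forall k, (lo <= k < hi)%nat -> 0 <= f k) -> 0 <= rsum lo hi f.
Proof. intros H. rewrite <- (rsum_const0 lo hi). apply rsum_le. auto. Qed.

Lemma rsum_term_le lo hi f k : (forall k, (lo <= k < hi)%nat -> 0 <= f k) -> (lo <= k < hi)%nat ->
  f k <= rsum lo hi f.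
Proof.
  intros H Hk. destruct (le_lt_dec lo hi) as [Hl|Hl]; [|lia].
  induction Hl. - lia.
  - rewrite rsum_Sr by lia. destruct (Nat.eq_dec k m).
    + subst. assert (0 <= rsum lo m f) by (apply rsum_nonneg; intros; apply H; lia). lra.
    + assert (f k <= rsum lo m f) by (apply IHHl; [intros; apply H; lia| lia]).
      assert (0 <= f m) by (apply H; lia). lra.
Qed.

Lemma rsum_split lo mid hi f : (lo <= mid <= hi)%nat -> rsum lo hi f = rsum lo mid f + rsum mid hi f.
Proof.
  intros [H1 H2]. induction H2.
  - rewrite (rsum_empty mid mid) by lia. lra.
  - rewrite !rsum_Sr by lia. rewrite IHle. lra.
Qed.

Lemma rsum_delta lo hi k (F : nat -> R) : (lo <= k < hi)%nat ->
  rsum lo hi (fun j => (if Nat.eq_dec j k then 1 else 0) * F j) = F k.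
Proof.
  intros Hk. rewrite (rsum_split lo k hi) by lia. rewrite (rsum_Sl k hi) by lia.
  rewrite (rsum_ext lo k _ (fun _ => 0)). 2:{ intros j Hj. destruct (Nat.eq_dec j k); [lia|lra]. }
  rewrite (rsum_ext (S k) hi _ (fun _ => 0)). 2:{ intros j Hj. destruct (Nat.eq_dec j k); [lia|lra]. }
  rewrite !rsum_const0. destruct (Nat.eq_dec k k); [lra|congruence].
Qed.

Lemma rsum_swap h y f :
  rsum 0 h (fun j => y j * rsum 0 (S j) f) = rsum 0 h (fun k => f k * rsum k h y).
Proof.
  induction h.
  - rewrite !rsum_empty; lia||lra.
  - rewrite !rsum_Sr by lia. rewrite IHh.
    rewrite (rsum_ext 0 h (fun k => f k * rsum k (S h) y) (fun k => f k * rsum k h y + f k * y h)).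
    2:{ intros k Hk. rewrite rsum_Sr by lia. lra. }
    rewrite rsum_plus. rewrite (rsum_empty h h) by lia.
    rewrite (rsum_ext 0 h (fun k => f k * y h) (fun k => y h * f k)) by (intros; lra).
    rewrite rsum_scal. lra.
Qed.

Lemma rsum_zero_terms lo hi f : (forall k, (lo <= k < hi)%nat -> 0 <= f k) -> rsum lo hi f = 0 ->
  forall k, (lo <= k < hi)%nat -> f k = 0.
Proof.
  intros H Hs k Hk. pose proof (rsum_term_le lo hi f k H Hk). pose proof (H k Hk). lra.
Qed.

Lemma rsum_minus lo hi f g : rsum lo hi (fun k => f k - g k) = rsum lo hi f - rsum lo hi g.
Proof.
  rewrite (rsum_ext lo hi _ (fun k => f k + (-1) * g k)) by (intros; ring).
  rewrite rsum_plus, rsum_scal. ring.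
Qed.

Lemma ln_le_sub1 x : 0 < x -> ln x <= x - 1.
Proof. intros Hx. pose proof (exp_ineq1_le (ln x)). rewrite exp_ln in H by auto. lra. Qed.

Lemma ln_div x y : 0 < x -> 0 < y -> ln (x / y) = ln x - ln y.
Proof. intros. unfold Rdiv. rewrite ln_mult; [rewrite ln_Rinv; [lra|auto]|auto|apply Rinv_0_lt_compat; auto]. Qed.

Lemma ln_tangent w x M : 0 <= w -> 0 < x -> 0 < M -> w * ln x <= w * ln M + w * (x / M) - w.
Proof.
  intros Hw Hx HM. pose proof (ln_le_sub1 (x / M)) as H.
  assert (0 < x / M) by (apply Rdiv_lt_0_compat; auto).
  rewrite ln_div in H by auto. specialize (H H0).
  assert (w * (ln x - ln M) <= w * (x / M - 1)) by (apply Rmult_le_compat_l; auto). nra.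
Qed.

Lemma ln_lower e x : 0 < e <= /2 -> -1 <= x -> e * x - 2 * (e * e) * (x * x) <= ln (1 + e * x).
Proof.
  intros He Hx. assert (Hy : /2 <= 1 + e * x) by nra.
  assert (Hy0 : 0 < 1 + e * x) by lra.
  pose proof (ln_le_sub1 (/ (1 + e * x)) (Rinv_0_lt_compat _ Hy0)) as H.
  rewrite ln_Rinv in H by auto.
  assert (E : / (1 + e * x) = 1 - e * x / (1 + e * x)) by (field; lra).
  rewrite E in H.
  assert (e * x / (1 + e * x) = e * x - (e * x) * (e * x) / (1 + e * x)) by (field; lra).
  assert ((e * x) * (e * x) / (1 + e * x) <= 2 * (e*e) * (x*x)).
  { apply (Rmult_le_reg_r (1 + e*x)); auto. unfold Rdiv. rewrite Rmult_assoc, Rinv_l by lra.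
    assert (0 <= (e*x)*(e*x)) by nra. nra. }
  lra.
Qed.

Lemma ln_nonpos x : 0 < x -> x <= 1 -> ln x <= 0.
Proof. intros. pose proof (ln_le_sub1 x H). lra. Qed.

Lemma phi_sqrt x : 0 < x -> (sqrt x - 1) * (sqrt x - 1) <= x - 1 - ln x.
Proof.
  intros Hx. pose proof (sqrt_lt_R0 x Hx) as Hs. pose proof (sqrt_sqrt x (Rlt_le _ _ Hx)) as E.
  pose proof (ln_le_sub1 _ Hs) as H. replace (ln x) with (ln (sqrt x * sqrt x)) by (rewrite E; reflexivity). rewrite ln_mult by auto. nra.
Qed.

Lemma cv_const c : Un_cv (fun _ => c) c.
Proof. intros e He. exists 0%nat. intros. unfold Rdist. rewrite Rminus_diag, Rabs_R0. lra. Qed.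

Lemma cv_squeeze0 (u v : nat -> R) : (forall n, 0 <= u n <= v n) -> Un_cv v 0 -> Un_cv u 0.
Proof.
  intros H Hv e He. destruct (Hv e He) as [N HN]. exists N. intros n Hn. specialize (HN n Hn).
  specialize (H n). unfold Rdist in *. rewrite Rminus_0_r in *.
  rewrite Rabs_right in HN by lra. rewrite Rabs_right by lra. lra.
Qed.

Lemma cv_sq1 (u : nat -> R) : Un_cv (fun n => (u n - 1) * (u n - 1)) 0 -> Un_cv u 1.
Proof.
  intros H e He. destruct (H (e * e)) as [N HN]. { nra. } exists N. intros n Hn.
  specialize (HN n Hn). unfold Rdist in *. rewrite Rminus_0_r in HN.
  pose proof (Rle_0_sqr (u n - 1)) as Hsq; unfold Rsqr in Hsq.
  rewrite Rabs_right in HN by lra. destruct (Rcase_abs (u n - 1)).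
  - rewrite Rabs_left by lra. destruct (Rlt_or_le (-(u n - 1)) e); auto.
    assert (e * e <= (u n - 1) * (u n - 1)) by nra. lra.
  - rewrite Rabs_right by lra. destruct (Rlt_or_le (u n - 1) e); auto.
    assert (e * e <= (u n - 1) * (u n - 1)) by nra. lra.
Qed.

Lemma cv_ext (u v : nat -> R) l : (forall n, u n = v n) -> Un_cv u l -> Un_cv v l.
Proof. intros E H e He. destruct (H e He) as [N HN]. exists N. intros. rewrite <- E. auto. Qed.

Lemma cv_scal (u : nat -> R) l c : Un_cv u l -> Un_cv (fun n => c * u n) (c * l).
Proof. intros H. apply CV_mult; auto. apply cv_const. Qed.

Lemma gaps_cv0 (F d : nat -> R) : (forall n, 0 <= F n) -> (forall n, 0 <= d n) ->
  (forall n, F (S n) <= F n - d n) -> Un_cv d 0.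
Proof.
  intros HF Hd Hg.
  assert (Hdec : Un_decreasing F) by (intro n; specialize (Hg n); specialize (Hd n); lra).
  assert (Hlb : has_lb F). { exists 0. intros x [n Hn]. unfold opp_seq in Hn. specialize (HF n). lra. }
  destruct (decreasing_cv F Hdec Hlb) as [L HL].
  apply (cv_squeeze0 d (fun n => F n - F (S n))).
  - intros n. specialize (Hg n). specialize (Hd n). lra.
  - replace 0 with (L - L) by lra. apply CV_minus; auto.
    intros e He. destruct (HL e He) as [N HN]. exists N. intros. apply HN. lia.
Qed.

Lemma div_nonneg x y : 0 <= x -> 0 < y -> 0 <= x / y.
Proof. intros. unfold Rdiv. apply Rmult_le_pos; auto. apply Rlt_le, Rinv_0_lt_compat; auto. Qed.

Lemma rprod_Sr lo hi f : (lo <= hi)%nat -> rprod lo (S hi) f = rprod lo hi f * f hi.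
Proof.
  intros H. unfold rprod. replace (S hi - lo)%nat with (S (hi - lo)) by lia.
  rewrite seq_S, map_app, fold_right_app. simpl.
  replace (lo + (hi - lo))%nat with hi by lia.
  generalize (map f (seq lo (hi - lo))). intros l; induction l; simpl; [ring|rewrite IHl; ring].
Qed.

Lemma ln_rprod hi f : (forall k, (k < hi)%nat -> 0 < f k) ->
  0 < rprod 0 hi f /\ ln (rprod 0 hi f) = rsum 0 hi (fun k => ln (f k)).
Proof.
  induction hi; intros H.
  - unfold rprod, rsum. simpl. split; [lra|apply ln_1].
  - rewrite rprod_Sr, rsum_Sr by lia. destruct IHhi as [H1 H2]. { intros; apply H; lia. }
    assert (0 < f hi) by (apply H; lia). split. { nra. }
    rewrite ln_mult by auto. rewrite H2. reflexivity.
Qed.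

Lemma INR_nsum h f : INR (nsum h f) = rsum 0 h (fun j => INR (f j)).
Proof.
  induction h.
  - reflexivity.
  - rewrite rsum_Sr by lia. rewrite <- IHh. unfold nsum.
    rewrite seq_S, map_app, fold_right_app. simpl.
    assert (forall l c, fold_right Nat.add c l = (fold_right Nat.add 0 l + c)%nat).
    { induction l; intros; simpl; [lia|rewrite (IHl c); lia]. }
    rewrite H, Nat.add_0_r, plus_INR. lra.
Qed.

Section EM.
Variables (h : nat) (a : nat -> R) (xi zeta : nat -> nat) (ps : nat -> R).
Hypothesis hh : (0 < h)%nat.
Hypothesis ha : forall j, (j < h)%nat -> 0 < a j.
Hypothesis hxz : forall j, (j < h)%nat -> (1 <= xi j + zeta j)%nat.

Definition X j := INR (xi j).
Definition Z j := INR (zeta j).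
Definition St (p : nat -> R) k := rsum k h (fun l => p l * a l).
Definition Rr (p : nat -> R) j := rsum 0 (S j) (fun k => INR (zeta k) / St p k).
Definition NN := INR (nsum h zeta + nsum h xi).
Definition T (p : nat -> R) j := / NN * (INR (xi j) + p j * a j * Rr p j).
Definition pos (p : nat -> R) := forall j, (j < h)%nat -> 0 < p j.

Lemma X_nonneg j : 0 <= X j. Proof. apply pos_INR. Qed.
Lemma Z_nonneg j : 0 <= Z j. Proof. apply pos_INR. Qed.

Lemma NN_eq : NN = rsum 0 h X + rsum 0 h Z.
Proof. unfold NN. rewrite plus_INR, !INR_nsum. unfold X, Z. lra. Qed.

Lemma XZ_pos j : (j < h)%nat -> 1 <= X j + Z j.
Proof. intros Hj. unfold X, Z. rewrite <- plus_INR. apply (le_INR 1). apply hxz; auto. Qed.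

Lemma NN_pos : 0 < NN.
Proof.
  rewrite NN_eq, <- rsum_plus.
  assert (1 <= X 0%nat + Z 0%nat) by (apply XZ_pos; auto).
  pose proof (rsum_term_le 0 h (fun k => X k + Z k) 0%nat) as H1.
  assert (X 0%nat + Z 0%nat <= rsum 0 h (fun k => X k + Z k)).
  { apply H1. intros; pose proof (X_nonneg k); pose proof (Z_nonneg k); lra. lia. }
  lra.
Qed.

Lemma St_nonneg p k : pos p -> 0 <= St p k.
Proof.
  intros Hp. unfold St. apply rsum_nonneg. intros l Hl.
  pose proof (Hp l ltac:(lia)). pose proof (ha l ltac:(lia)). nra.
Qed.

Lemma St_pos p k : pos p -> (k < h)%nat -> 0 < St p k.
Proof.
  intros Hp Hk. unfold St. rewrite rsum_Sl by auto.
  pose proof (Hp k Hk). pose proof (ha k Hk).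
  assert (0 <= rsum (S k) h (fun l => p l * a l)).
  { apply rsum_nonneg. intros l Hl. pose proof (Hp l ltac:(lia)). pose proof (ha l ltac:(lia)). nra. }
  nra.
Qed.

Lemma St_Sl p k : (k < h)%nat -> St p k = p k * a k + St p (S k).
Proof. intros Hk. unfold St. apply rsum_Sl. auto. Qed.

Lemma St_h p : St p h = 0.
Proof. unfold St. apply rsum_empty. lia. Qed.

Lemma moment p y : rsum 0 h (fun j => y j * a j * Rr p j) = rsum 0 h (fun k => Z k * St y k / St p k).
Proof.
  unfold Rr. rewrite (rsum_swap h (fun j => y j * a j) (fun k => INR (zeta k) / St p k)).
  apply rsum_ext. intros k Hk. unfold St, Z, Rdiv. ring.
Qed.

Lemma moment_pos p y : pos p -> rsum 0 h (fun j => y j * a j * Rr p j) = rsum 0 h (fun k => Z k * (St y k / St p k)).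
Proof. intros. rewrite moment. apply rsum_ext. intros. unfold Rdiv. ring. Qed.

Lemma Rr_nonneg p j : pos p -> 0 <= Rr p j.
Proof.
  intros Hp. unfold Rr. apply rsum_nonneg. intros k Hk.
  destruct (le_lt_dec h k).
  - unfold St. rewrite rsum_empty by lia. unfold Rdiv. rewrite Rinv_0, Rmult_0_r. lra.
  - pose proof (St_pos p k Hp l). apply div_nonneg; auto. apply pos_INR.
Qed.

Lemma T_pos p : pos p -> pos (T p).
Proof.
  intros Hp j Hj. unfold T. apply Rmult_lt_0_compat. { apply Rinv_0_lt_compat, NN_pos. }
  pose proof (XZ_pos j Hj). pose proof (Rr_nonneg p j Hp). pose proof (Hp j Hj). pose proof (ha j Hj).
  fold (X j). destruct (Rlt_or_le 0 (X j)).
  - assert (0 <= p j * a j * Rr p j) by (apply Rmult_le_pos; nra). lra.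
  - assert (1 <= Z j) by (pose proof (X_nonneg j); lra).
    assert (Z j / St p j <= Rr p j).
    { unfold Rr. apply (rsum_term_le 0 (S j) (fun k => INR (zeta k) / St p k) j).
      - intros k Hk. apply div_nonneg. apply pos_INR. apply St_pos; auto; lia.
      - lia. }
    pose proof (St_pos p j Hp Hj).
    assert (0 < Z j / St p j) by (apply Rdiv_lt_0_compat; lra).
    pose proof (X_nonneg j).
    assert (0 < p j * a j * Rr p j) by (apply Rmult_lt_0_compat; nra). lra.
Qed.

Lemma T_sum p : pos p -> rsum 0 h (T p) = 1.
Proof.
  intros Hp. unfold T. rewrite rsum_scal, rsum_plus. rewrite moment_pos by auto.
  rewrite (rsum_ext 0 h (fun k => Z k * (St p k / St p k)) Z).
  2:{ intros k Hk. pose proof (St_pos p k Hp ltac:(lia)). field. lra. }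
  fold X. replace (rsum 0 h (fun j => X j)) with (rsum 0 h X) by reflexivity.
  rewrite <- NN_eq. pose proof NN_pos. field. lra.
Qed.

Lemma T_simplex p : pos p -> in_simplex h (T p).
Proof. intros Hp. split. { intros j Hj. apply Rlt_le, T_pos; auto. } apply T_sum; auto. Qed.


Hypothesis hps_simplex : in_simplex h ps.
Hypothesis hps_pos : pos ps.
Definition lnL p := rsum 0 h (fun j => X j * ln (p j) + Z j * ln (St p j)).
Definition likA p := rprod 0 h (fun j => p j ^ xi j * St p j ^ zeta j).
Hypothesis hmax : forall q, in_simplex h q -> likA q <= likA ps.

Lemma ln_likA p : pos p -> 0 < likA p /\ ln (likA p) = lnL p.
Proof.
  intros Hp. unfold likA.
  destruct (ln_rprod h (fun j => p j ^ xi j * St p j ^ zeta j)) as [H1 H2].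
  { intros k Hk. apply Rmult_lt_0_compat; apply pow_lt; [apply Hp|apply St_pos]; auto. }
  split; auto. rewrite H2. unfold lnL. apply rsum_ext. intros k Hk.
  pose proof (Hp k ltac:(lia)). pose proof (St_pos p k Hp ltac:(lia)).
  rewrite ln_mult by (apply pow_lt; auto). rewrite !ln_pow by auto. reflexivity.
Qed.

Lemma lnL_max q : in_simplex h q -> pos q -> lnL q <= lnL ps.
Proof.
  intros Hq Hqp. destruct (ln_likA q Hqp) as [A1 A2]. destruct (ln_likA ps hps_pos) as [B1 B2].
  rewrite <- A2, <- B2. pose proof (hmax q Hq) as H. destruct (Rle_lt_or_eq_dec _ _ H).
  - apply Rlt_le, ln_increasing; auto.
  - rewrite e. lra.
Qed.

Definition ek (k : nat) := fun j => if Nat.eq_dec j k then 1 else 0.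

Lemma rsum_ek k F : (k < h)%nat -> rsum 0 h (fun j => ek k j * F j) = F k.
Proof. intros Hk. unfold ek. apply rsum_delta. lia. Qed.

Lemma ek_nonneg k j : 0 <= ek k j.
Proof. unfold ek. destruct (Nat.eq_dec j k); lra. Qed.

Lemma St_lin p q c d k : St (fun j => c * p j + d * q j) k = c * St p k + d * St q k.
Proof.
  unfold St. rewrite <- !rsum_scal, <- rsum_plus. apply rsum_ext. intros. ring.
Qed.

Lemma St_ek_nonneg k j : 0 <= St (ek k) j.
Proof. unfold St. apply rsum_nonneg. intros l Hl. pose proof (ek_nonneg k l). pose proof (ha l ltac:(lia)). nra. Qed.

Lemma stat_le k : (k < h)%nat -> X k + ps k * a k * Rr ps k <= NN * ps k.
Proof.
  intros Hk.
  set (v := fun j => ek k j / ps j - 1).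
  set (u := fun j => St (ek k) j / St ps j - 1).
  set (C := rsum 0 h (fun j => X j * (v j * v j) + Z j * (u j * u j))).
  set (B := rsum 0 h (fun j => X j * v j + Z j * u j)).
  assert (HC : 0 <= C).
  { apply rsum_nonneg. intros j Hj. pose proof (X_nonneg j). pose proof (Z_nonneg j).
    assert (0 <= v j * v j) by nra. assert (0 <= u j * u j) by nra. nra. }
  assert (Hv : forall j, (j < h)%nat -> -1 <= v j).
  { intros j Hj. unfold v. pose proof (div_nonneg _ _ (ek_nonneg k j) (hps_pos j Hj)). lra. }
  assert (Hu : forall j, (j < h)%nat -> -1 <= u j).
  { intros j Hj. unfold u. pose proof (div_nonneg _ _ (St_ek_nonneg k j) (St_pos ps j hps_pos Hj)). lra. }
  assert (Claim1 : forall e, 0 < e <= /2 -> B <= 2 * e * C).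
  { intros e He. set (q := fun j => (1 - e) * ps j + e * ek k j).
    assert (Hqp : pos q).
    { intros j Hj. unfold q. pose proof (hps_pos j Hj). pose proof (ek_nonneg k j). nra. }
    assert (Hqs : in_simplex h q).
    { split. { intros j Hj. apply Rlt_le, Hqp; auto. }
      unfold q. rewrite rsum_plus, !rsum_scal. destruct hps_simplex as [_ Hs]. rewrite Hs.
      rewrite (rsum_ext 0 h (ek k) (fun j => ek k j * 1)) by (intros; ring).
      rewrite rsum_ek by auto. ring. }
    pose proof (lnL_max q Hqs Hqp) as Hm.
    assert (Hd : lnL q - lnL ps = rsum 0 h (fun j => X j * ln (1 + e * v j) + Z j * ln (1 + e * u j))).
    { unfold lnL. rewrite <- rsum_minus. apply rsum_ext. intros j Hj.
      pose proof (hps_pos j ltac:(lia)). pose proof (Hqp j ltac:(lia)).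
      pose proof (St_pos ps j hps_pos ltac:(lia)). pose proof (St_pos q j Hqp ltac:(lia)).
      assert (E1 : 1 + e * v j = q j / ps j) by (unfold v, q; field; lra).
      assert (E2 : 1 + e * u j = St q j / St ps j).
      { unfold u, q. rewrite St_lin. field. lra. }
      rewrite E1, E2, !ln_div by auto. ring. }
    assert (Hlow : e * B - 2 * (e * e) * C <= lnL q - lnL ps).
    { rewrite Hd. unfold B, C.
      replace (e * rsum 0 h (fun j => X j * v j + Z j * u j) - 2 * (e * e) * rsum 0 h (fun j => X j * (v j * v j) + Z j * (u j * u j)))
        with (rsum 0 h (fun j => e * (X j * v j + Z j * u j)) + rsum 0 h (fun j => - (2 * (e*e)) * (X j * (v j * v j) + Z j * (u j * u j)))).
      2:{ rewrite !rsum_scal. ring. }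
      rewrite <- rsum_plus. apply rsum_le. intros j Hj.
      pose proof (ln_lower e (v j) He (Hv j ltac:(lia))). pose proof (ln_lower e (u j) He (Hu j ltac:(lia))).
      pose proof (X_nonneg j). pose proof (Z_nonneg j).
      assert (X j * (e * v j - 2 * (e * e) * (v j * v j)) <= X j * ln (1 + e * v j)) by (apply Rmult_le_compat_l; auto).
      assert (Z j * (e * u j - 2 * (e * e) * (u j * u j)) <= Z j * ln (1 + e * u j)) by (apply Rmult_le_compat_l; auto).
      nra. }
    assert (e * B <= e * (2 * e * C)) by nra.
    apply (Rmult_le_reg_l e); lra. }
  assert (Claim2 : B <= 0).
  { destruct (Rle_or_lt B 0) as [|HB]; auto.
    set (e := Rmin (/2) (B / (4 * (C + 1)))).
    assert (He : 0 < e <= /2).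
    { unfold e. split. apply Rmin_glb_lt. lra. apply Rdiv_lt_0_compat; lra. apply Rmin_l. }
    pose proof (Claim1 e He).
    assert (e <= B / (4 * (C + 1))) by apply Rmin_r.
    assert (2 * e * C <= 2 * (B / (4 * (C + 1))) * C) by nra.
    assert (2 * (B / (4 * (C + 1))) * C < B).
    { unfold Rdiv. apply (Rmult_lt_reg_r (4 * (C + 1))). lra.
      replace (2 * (B * / (4 * (C + 1))) * C * (4 * (C + 1))) with (2 * B * C) by (field; lra). nra. }
    lra. }
  assert (Claim3 : B = X k / ps k + a k * Rr ps k - NN).
  { unfold B. rewrite rsum_plus. unfold v, u.
    rewrite (rsum_ext 0 h (fun j => X j * (ek k j / ps j - 1)) (fun j => ek k j * (X j / ps j) + -1 * X j)) by (intros; unfold Rdiv; ring).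
    rewrite (rsum_ext 0 h (fun j => Z j * (St (ek k) j / St ps j - 1)) (fun j => Z j * (St (ek k) j / St ps j) + -1 * Z j)) by (intros; ring).
    rewrite !rsum_plus, !rsum_scal. rewrite rsum_ek by auto.
    rewrite <- (moment_pos ps (ek k) hps_pos).
    rewrite (rsum_ext 0 h (fun j => ek k j * a j * Rr ps j) (fun j => ek k j * (a j * Rr ps j))) by (intros; ring).
    rewrite rsum_ek by auto. rewrite NN_eq. fold X Z. ring. }
  pose proof (hps_pos k Hk).
  assert (X k / ps k + a k * Rr ps k <= NN) by lra.
  apply (Rmult_le_reg_l (/ ps k)). apply Rinv_0_lt_compat; auto.
  replace (/ ps k * (X k + ps k * a k * Rr ps k)) with (X k / ps k + a k * Rr ps k) by (field; lra).
  replace (/ ps k * (NN * ps k)) with NN by (field; lra). auto.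
Qed.

Lemma stat k : (k < h)%nat -> X k + ps k * a k * Rr ps k = NN * ps k.
Proof.
  assert (H0 : rsum 0 h (fun k => NN * ps k - (X k + ps k * a k * Rr ps k)) = 0).
  { rewrite (rsum_ext 0 h _ (fun k => NN * ps k + -1 * X k + -1 * (ps k * a k * Rr ps k))) by (intros; ring).
    rewrite !rsum_plus, !rsum_scal. destruct hps_simplex as [_ Hs]. rewrite Hs.
    rewrite moment_pos by auto.
    rewrite (rsum_ext 0 h (fun k => Z k * (St ps k / St ps k)) Z).
    2:{ intros i Hi. pose proof (St_pos ps i hps_pos ltac:(lia)). field. lra. }
    rewrite NN_eq. ring. }
  intros Hk. assert (Hnn : forall i, (0 <= i < h)%nat -> 0 <= NN * ps i - (X i + ps i * a i * Rr ps i)).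
  { intros i Hi. pose proof (stat_le i ltac:(lia)). lra. }
  pose proof (rsum_zero_terms 0 h _ Hnn H0 k ltac:(lia)). simpl in H. lra.
Qed.

Definition Phi p := - rsum 0 h (fun j => ps j * ln (p j)).
Definition Dv p := / NN * rsum 0 h (fun j => X j * ln (ps j / p j) + Z j * ln (St ps j / St p j)).

Lemma T_expand p j : T p j = / NN * (X j + p j * a j * Rr p j).
Proof. reflexivity. Qed.

Lemma lyap_j p j : pos p -> (j < h)%nat ->
  X j / NN * ln (ps j / p j) + ps j * a j * rsum 0 (S j) (fun k => Z k / St ps k * ln (St ps k / St p k) / NN)
  <= ps j * ln (T p j / p j).
Proof.
  intros Hp Hj.
  pose proof (Hp j Hj) as Hpj. pose proof (hps_pos j Hj) as Hpsj. pose proof (ha j Hj) as Haj.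
  pose proof NN_pos as HN. pose proof (T_pos p Hp j Hj) as HTj.
  assert (HM : 0 < T p j / p j) by (apply Rdiv_lt_0_compat; auto).
  set (M := T p j / p j) in *. set (L := ln M).
  assert (H1 : X j * ln (ps j / p j) <= X j * L + X j * ((ps j / p j) / M) - X j).
  { apply ln_tangent; auto. apply X_nonneg. apply Rdiv_lt_0_compat; auto. }
  assert (H2 : rsum 0 (S j) (fun k => Z k / St ps k * ln (St ps k / St p k))
     <= L * Rr ps j + / M * Rr p j - Rr ps j).
  { replace (L * Rr ps j + / M * Rr p j - Rr ps j) with (rsum 0 (S j) (fun k => L * (INR (zeta k)/St ps k) + /M * (INR(zeta k)/St p k) - INR(zeta k)/St ps k))
      by (unfold Rr; rewrite rsum_minus, rsum_plus, !rsum_scal; ring).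
    apply rsum_le. intros k Hk.
    pose proof (St_pos ps k hps_pos ltac:(lia)). pose proof (St_pos p k Hp ltac:(lia)).
    pose proof (ln_tangent (Z k / St ps k) (St ps k / St p k) M (div_nonneg _ _ (Z_nonneg k) H)
      (Rdiv_lt_0_compat _ _ H H0) HM) as Ht.
    unfold Z in *.
    replace (INR (zeta k) / St ps k * (St ps k / St p k / M)) with (/ M * (INR (zeta k) / St p k)) in Ht by (field; lra).
    unfold L. lra. }
  assert (E : rsum 0 (S j) (fun k => Z k / St ps k * ln (St ps k / St p k) / NN)
            = / NN * rsum 0 (S j) (fun k => Z k / St ps k * ln (St ps k / St p k))).
  { rewrite <- rsum_scal. apply rsum_ext. intros. unfold Rdiv. ring. }
  rewrite E.
  assert (H1' : X j / NN * ln (ps j / p j) <= / NN * (X j * L + X j * ((ps j / p j) / M) - X j)).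
  { unfold Rdiv at 1. rewrite (Rmult_comm (X j)), Rmult_assoc. apply Rmult_le_compat_l; auto.
    apply Rlt_le, Rinv_0_lt_compat; auto. }
  assert (H2' : ps j * a j * (/ NN * rsum 0 (S j) (fun k => Z k / St ps k * ln (St ps k / St p k)))
      <= ps j * a j * (/ NN * (L * Rr ps j + / M * Rr p j - Rr ps j))).
  { apply Rmult_le_compat_l. nra. apply Rmult_le_compat_l; auto. apply Rlt_le, Rinv_0_lt_compat; auto. }
  assert (Eq : / NN * (X j * L + X j * ((ps j / p j) / M) - X j) + ps j * a j * (/ NN * (L * Rr ps j + / M * Rr p j - Rr ps j))
     = ps j * L).
  { pose proof (stat j Hj) as Hs.
    assert (HMe : M = / NN * (X j + p j * a j * Rr p j) / p j) by reflexivity.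
    assert (Hden : 0 < X j + p j * a j * Rr p j).
    { rewrite T_expand in HTj. apply (Rmult_lt_reg_l (/ NN)). apply Rinv_0_lt_compat; auto. lra. }
    clearbody L. rewrite HMe.
    replace (X j) with (NN * ps j - ps j * a j * Rr ps j) by lra.
    field. repeat split; try lra. }
  lra.
Qed.

Lemma lyap p : pos p -> Dv p <= rsum 0 h (fun j => ps j * ln (T p j / p j)).
Proof.
  intros Hp.
  eapply Rle_trans; [|apply rsum_le; intros j Hj; apply lyap_j; auto; lia].
  rewrite rsum_plus.
  rewrite rsum_swap.
  unfold Dv. rewrite rsum_plus, Rmult_plus_distr_l, <- !rsum_scal. apply Req_le. f_equal.
  - apply rsum_ext. intros. unfold Rdiv. ring.
  - apply rsum_ext. intros k Hk. pose proof (St_pos ps k hps_pos ltac:(lia)).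
    change (rsum k h (fun j => ps j * a j)) with (St ps k). pose proof NN_pos. field. split; lra.
Qed.

Lemma Phi_step p : pos p -> Phi (T p) = Phi p - rsum 0 h (fun j => ps j * ln (T p j / p j)).
Proof.
  intros Hp. unfold Phi.
  rewrite (rsum_ext 0 h (fun j => ps j * ln (T p j / p j)) (fun j => ps j * ln (T p j) - ps j * ln (p j))).
  2:{ intros j Hj. rewrite ln_div; [ring| apply T_pos; auto; lia | apply Hp; lia]. }
  rewrite rsum_minus. ring.
Qed.

Lemma Phi_nonneg p : in_simplex h p -> pos p -> 0 <= Phi p.
Proof.
  intros [Hn Hs] Hp. unfold Phi. assert (rsum 0 h (fun j => ps j * ln (p j)) <= 0); [|lra].
  rewrite <- (rsum_const0 0 h). apply rsum_le. intros j Hj.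
  assert (p j <= 1). { rewrite <- Hs. apply (rsum_term_le 0 h p j); [intros; apply Hn; lia | lia]. }
  pose proof (ln_nonpos (p j) (Hp j ltac:(lia)) H). pose proof (hps_pos j ltac:(lia)). nra.
Qed.

Definition phi x := x - 1 - ln x.

Lemma D_decomp p : in_simplex h p -> pos p ->
  NN * Dv p = rsum 0 h (fun j => X j * phi (p j / ps j) + Z j * phi (St p j / St ps j)).
Proof.
  intros [Hn Hs] Hp. unfold Dv. pose proof NN_pos.
  replace (NN * (/ NN * rsum 0 h (fun j => X j * ln (ps j / p j) + Z j * ln (St ps j / St p j))))
    with (rsum 0 h (fun j => X j * ln (ps j / p j) + Z j * ln (St ps j / St p j))) by (field; lra).
  assert (Hsum : rsum 0 h (fun j => X j * (p j / ps j) + Z j * (St p j / St ps j)) = rsum 0 h X + rsum 0 h Z).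
  { rewrite rsum_plus. rewrite <- (moment_pos ps p hps_pos).
    rewrite <- rsum_plus.
    rewrite (rsum_ext 0 h _ (fun j => NN * p j)).
    2:{ intros j Hj. pose proof (stat j ltac:(lia)). pose proof (hps_pos j ltac:(lia)).
        apply (Rmult_eq_reg_l (ps j)); [|lra]. replace (ps j * (NN * p j)) with (p j * (NN * ps j)) by ring.
        rewrite <- H0. field. lra. }
    rewrite rsum_scal, Hs, NN_eq. ring. }
  rewrite (rsum_ext 0 h (fun j => X j * phi (p j / ps j) + Z j * phi (St p j / St ps j))
     (fun j => (X j * (p j / ps j) + Z j * (St p j / St ps j)) - (X j + Z j) + (X j * ln (ps j / p j) + Z j * ln (St ps j / St p j)))).
  2:{ intros j Hj. unfold phi. pose proof (Hp j ltac:(lia)). pose proof (hps_pos j ltac:(lia)).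
      pose proof (St_pos p j Hp ltac:(lia)). pose proof (St_pos ps j hps_pos ltac:(lia)).
      rewrite !ln_div by auto. ring. }
  rewrite (rsum_plus 0 h (fun j => (X j * (p j / ps j) + Z j * (St p j / St ps j)) - (X j + Z j))).
  rewrite rsum_minus, Hsum, (rsum_plus 0 h X Z). ring.
Qed.

Lemma phi_nonneg x : 0 < x -> 0 <= phi x.
Proof. intros. pose proof (phi_sqrt x H). pose proof (Rle_0_sqr (sqrt x - 1)). unfold phi, Rsqr in *. lra. Qed.

Lemma D_terms p : in_simplex h p -> pos p -> forall j, (j < h)%nat ->
  X j * phi (p j / ps j) <= NN * Dv p /\ Z j * phi (St p j / St ps j) <= NN * Dv p.
Proof.
  intros Hs Hp j Hj. rewrite D_decomp by auto.
  assert (Hnn : forall k, (0 <= k < h)%nat -> 0 <= X k * phi (p k / ps k) /\ 0 <= Z k * phi (St p k / St ps k)).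
  { intros k Hk. pose proof (Hp k ltac:(lia)). pose proof (hps_pos k ltac:(lia)).
    pose proof (St_pos p k Hp ltac:(lia)). pose proof (St_pos ps k hps_pos ltac:(lia)).
    split; apply Rmult_le_pos; try apply X_nonneg; try apply Z_nonneg; apply phi_nonneg; apply Rdiv_lt_0_compat; auto. }
  pose proof (rsum_term_le 0 h (fun k => X k * phi (p k / ps k) + Z k * phi (St p k / St ps k)) j) as Ht.
  simpl in Ht. specialize (Ht ltac:(intros k Hk; destruct (Hnn k Hk); lra) ltac:(lia)).
  destruct (Hnn j ltac:(lia)). split; lra.
Qed.

Variable p0 : nat -> R.
Hypothesis hp0s : in_simplex h p0.
Hypothesis hp0p : pos p0.

Definition pn n := Nat.iter n T p0.

Lemma pn_inv n : in_simplex h (pn n) /\ pos (pn n).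
Proof.
  induction n. - split; auto.
  - destruct IHn as [_ Hp]. change (pn (S n)) with (T (pn n)). split. apply T_simplex; auto. apply T_pos; auto.
Qed.

Lemma Dv_nonneg p : in_simplex h p -> pos p -> 0 <= Dv p.
Proof.
  intros Hs Hp. destruct (D_terms p Hs Hp 0%nat hh) as [H1 _].
  assert (0 <= X 0%nat * phi (p 0%nat / ps 0%nat)).
  { apply Rmult_le_pos. apply X_nonneg. apply phi_nonneg. apply Rdiv_lt_0_compat; auto. }
  pose proof NN_pos. assert (0 <= NN * Dv p) by lra.
  apply (Rmult_le_reg_l NN); lra.
Qed.

Lemma D_cv : Un_cv (fun n => Dv (pn n)) 0.
Proof.
  apply (gaps_cv0 (fun n => Phi (pn n))).
  - intros n. destruct (pn_inv n). apply Phi_nonneg; auto.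
  - intros n. destruct (pn_inv n). apply Dv_nonneg; auto.
  - intros n. destruct (pn_inv n) as [_ Hp]. change (pn (S n)) with (T (pn n)).
    rewrite Phi_step by auto. pose proof (lyap (pn n) Hp). lra.
Qed.

Lemma cv_ratio (y : nat -> R) c w : 0 < c -> 0 < w -> (forall n, 0 < y n) ->
  (forall n, w * phi (y n / c) <= NN * Dv (pn n)) -> Un_cv y c.
Proof.
  intros Hc Hw Hy Hb.
  set (u := fun n => sqrt (y n / c)).
  assert (Hu : Un_cv u 1).
  { apply cv_sq1. apply (cv_squeeze0 _ (fun n => / w * (NN * Dv (pn n)))).
    - intros n. pose proof (Hy n). assert (0 < y n / c) by (apply Rdiv_lt_0_compat; auto).
      pose proof (phi_sqrt _ H0). pose proof (Rle_0_sqr (u n - 1)). unfold Rsqr in *.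
      split; auto. specialize (Hb n). unfold u. fold (phi (y n / c)) in H1.
      apply (Rmult_le_reg_l w); auto. replace (w * (/ w * (NN * Dv (pn n)))) with (NN * Dv (pn n)) by (field; lra).
      assert (w * ((sqrt (y n / c) - 1) * (sqrt (y n / c) - 1)) <= w * phi (y n / c)) by (apply Rmult_le_compat_l; lra).
      lra.
    - replace 0 with (/ w * (NN * 0)) by ring. apply cv_scal, cv_scal, D_cv. }
  apply (cv_ext (fun n => c * (u n * u n))).
  - intros n. unfold u. rewrite sqrt_sqrt. field. lra. apply Rlt_le, Rdiv_lt_0_compat; auto.
  - assert (H: Un_cv (fun n => c * (u n * u n)) (c * (1 * 1))) by (apply cv_scal, CV_mult; auto).
    replace (c * (1*1)) with c in H by ring. exact H.
Qed.

Lemma cvX j : (j < h)%nat -> 0 < X j -> Un_cv (fun n => pn n j) (ps j).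
Proof.
  intros Hj HX. apply (cv_ratio _ _ (X j)); auto.
  - intros n. destruct (pn_inv n) as [_ Hp]. auto.
  - intros n. destruct (pn_inv n) as [Hs Hp]. apply (D_terms _ Hs Hp j Hj).
Qed.

Lemma cvZ j : (j < h)%nat -> 0 < Z j -> Un_cv (fun n => St (pn n) j) (St ps j).
Proof.
  intros Hj HZ. apply (cv_ratio _ _ (Z j)); auto.
  - apply St_pos; auto.
  - intros n. destruct (pn_inv n) as [_ Hp]. apply St_pos; auto.
  - intros n. destruct (pn_inv n) as [Hs Hp]. apply (D_terms _ Hs Hp j Hj).
Qed.

Lemma cv_all d : (d <= h)%nat ->
  Un_cv (fun n => St (pn n) (h - d)) (St ps (h - d)) /\
  forall j, (h - d <= j < h)%nat -> Un_cv (fun n => pn n j) (ps j).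
Proof.
  induction d; intros Hd.
  - rewrite Nat.sub_0_r. split.
    + rewrite St_h. apply (cv_ext (fun _ => 0)). intros. rewrite St_h. auto. apply cv_const.
    + intros. lia.
  - destruct IHd as [IH1 IH2]. lia.
    set (k := (h - S d)%nat). assert (Hk : (k < h)%nat) by lia.
    assert (Ek : (h - d)%nat = S k) by lia. rewrite Ek in IH1, IH2.
    pose proof (ha k Hk) as Hak.
    assert (Hpk : Un_cv (fun n => pn n k) (ps k) /\ Un_cv (fun n => St (pn n) k) (St ps k)).
    { destruct (Rlt_le_dec 0 (X k)) as [HX|HX].
      - pose proof (cvX k Hk HX) as Hc. split; auto.
        apply (cv_ext (fun n => pn n k * a k + St (pn n) (S k))). { intros. rewrite (St_Sl (pn n) k Hk). reflexivity. }
        rewrite (St_Sl ps k Hk). apply CV_plus; auto. apply CV_mult; auto. apply cv_const.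
      - pose proof (XZ_pos k Hk). pose proof (X_nonneg k).
        assert (HZ : 0 < Z k) by lra. pose proof (cvZ k Hk HZ) as Hc. split; auto.
        apply (cv_ext (fun n => / a k * (St (pn n) k - St (pn n) (S k)))).
        { intros. rewrite (St_Sl (pn n) k Hk). field. lra. }
        replace (ps k) with (/ a k * (St ps k - St ps (S k))) by (rewrite (St_Sl ps k Hk); field; lra).
        apply cv_scal, CV_minus; auto. }
    destruct Hpk as [Hp1 Hp2]. split; auto.
    intros j Hj. destruct (Nat.eq_dec j k). subst j. auto. apply IH2. lia.
Qed.

Lemma cv_main j : (j < h)%nat -> Un_cv (fun n => pn n j) (ps j).
Proof. intros Hj. destruct (cv_all h (le_n h)) as [_ H]. apply H. lia. Qed.
End EM.

Theorem mainTheorem3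
  (h : nat) (t : nat -> R) (W : R -> R) (xi zeta : nat -> nat)
  (ht0 : (0 < h)%nat -> 0 < t 0%nat)
  (ht_incr : forall j, (S j < h)%nat -> t j < t (S j))
  (hW_pos : forall x, 0 < x -> 0 < W x)
  (hW_mono : forall x y, 0 < x -> x <= y -> W x <= W y)
  (hxz : forall j, (j < h)%nat -> (1 <= xi j + zeta j)%nat)
  (pstar : nat -> R)
  (hstar_simplex : in_simplex h pstar)
  (hstar_max : forall q, in_simplex h q -> lik h t W xi zeta q <= lik h t W xi zeta pstar)
  (hstar_pos : forall j, (j < h)%nat -> 0 < pstar j)
  (p0 : nat -> R)
  (hp0_simplex : in_simplex h p0)
  (hp0_pos : forall j, (j < h)%nat -> 0 < p0 j) :
  forall j, (j < h)%nat ->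
    Un_cv (fun N => Nat.iter N (EM_T h t W xi zeta) p0 j) (pstar j).
Proof.
  intros j Hj.
  assert (hh : (0 < h)%nat) by lia.
  assert (Ht : forall k, (k < h)%nat -> 0 < t k).
  { induction k; intros Hk. apply ht0; auto. pose proof (ht_incr k Hk). pose proof (IHk ltac:(lia)). lra. }
  assert (ha : forall k, (k < h)%nat -> 0 < (fun l => / W (t l)) k).
  { intros k Hk. apply Rinv_0_lt_compat, hW_pos, Ht; auto. }
  exact (cv_main h (fun l => / W (t l)) xi zeta pstar hh ha hxz hstar_simplex hstar_pos hstar_max p0 hp0_simplex hp0_pos j Hj).
Qed.
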